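(* Let $n\geq 5$ and let $H$ be a Hamiltonian cycle in the complete graph $K_n$. Then $G=K_n-H$ (the graph on $V(K_n)$ with edge set $E(K_n)\setminus E(H)$) is $2$-swappable.
   Context: For a graph $G$, $A\subseteq E(G)$ and $B\subseteq E(\bar G)$ (edges of the complement), $G-A+B$ denotes the graph on $V(G)$ with edge set $(E(G)\setminus A)\cup B$. $G$ is $2$-swappable if for every $e\in E(G)$ there exist $A\subseteq E(G)$ and $B\subseteq E(\bar G)$ with $e\in A$, $|A|\leq 2$, and $G\cong G-A+B$. *)

(* Defs.v *)
(* Simple graphs on a finite vertex type T are given by their
   edge sets: sets of 2-element subsets of T. *)
From mathcomp Require Import all_boot all_fingroup.
Set Implicit Arguments. Unset Strict Implicit. Unset Printing Implicit Defensive.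

Definition complete_edges (T : finType) : {set {set T}} :=
  [set e : {set T} | #|e| == 2].

Definition compl_edges (T : finType) (E : {set {set T}}) : {set {set T}} :=
  complete_edges T :\: E.

Definition swap_edges (T : finType) (E A B : {set {set T}}) : {set {set T}} :=
  (E :\: A) :|: B.

Definition graph_iso (T : finType) (E E' : {set {set T}}) : Prop :=
  exists f : {perm T}, forall e : {set T}, (e \in E) = ((f @: e) \in E').

Definition two_swappable (T : finType) (E : {set {set T}}) : Prop :=
  forall e, e \in E ->
    exists A B : {set {set T}},
      [/\ A \subset E, B \subset compl_edges E, e \in A, #|A| <= 2
        & graph_iso E (swap_edges E A B)].

(* edge set of the Hamiltonian cycle s(0) s(1) ... s(n-1) s(0) in K_n *)
Definition ham_cycle_edges (n : nat) (s : {perm 'I_n}) : {set {set 'I_n}} :=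
  [set [set s i; s (ordS i)] | i : 'I_n].

Definition is_ham_cycle (n : nat) (H : {set {set 'I_n}}) : Prop :=
  exists s : {perm 'I_n}, H = ham_cycle_edges s.

(* Main.v *)
Require Import Defs.
From mathcomp Require Import all_boot all_fingroup.
From mathcomp Require Import zify.

Definition Sn n x := if x.+1 == n then 0 else x.+1.
Definition gn i j x := if (i < x) && (x <= j) then i.+1 + j - x else x.
Definition adjn n a b := (b == Sn n a) || (a == Sn n b).
Definition prn (a b c d : nat) := ((a == c) && (b == d)) || ((a == d) && (b == c)).

Lemma SnP n x : ((x.+1 == n) && (Sn n x == 0)) || ((x.+1 != n) && (Sn n x == x.+1)).
Proof. rewrite /Sn; case: ifP; lia. Qed.
Lemma gnP i j x : ((i < x) && (x <= j) && (gn i j x == i.+1 + j - x)) || (~~((i < x) && (x <= j)) && (gn i j x == x)).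
Proof. rewrite /gn; case: ifP; lia. Qed.

Ltac decide_eqs := repeat match goal with
 | |- context [?a == ?b :> nat] => first [ rewrite (_ : (a == b) = true); [| by apply/eqP; lia] | rewrite (_ : (a == b) = false); [| by apply/negbTE/eqP; lia] ] end.
Ltac dsp H := case/orP: H => /andP[? /eqP ?]; subst.
Ltac finish := try (exfalso; lia); decide_eqs; by rewrite ?andbF ?orbF ?orbT.

Section Arith.
Variables (n i j : nat).
Hypotheses (h1 : i < j) (h2 : j < n) (h3 : j != i.+1) (h4 : ~~ ((i == 0) && (j.+1 == n))).

Lemma L1 x : x < n ->
  [|| prn (gn i j x) (gn i j (Sn n x)) i j, prn (gn i j x) (gn i j (Sn n x)) (Sn n i) (Sn n j)
    | ~~ (prn (gn i j x) (gn i j (Sn n x)) i (Sn n i) || prn (gn i j x) (gn i j (Sn n x)) j (Sn n j)) && adjn n (gn i j x) (gn i j (Sn n x))].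
Proof.
move=> hx; rewrite /adjn /prn.
have := SnP n i; have := SnP n j; have := SnP n x.
move: (Sn n i) (Sn n j) (Sn n x) => si sj sx hx' hj hi.
have {hi} -> : si = i.+1 by lia.
have := gnP i j x; have := gnP i j sx.
move: (gn i j x) (gn i j sx) => a b hb ha.
have := SnP n a; have := SnP n b.
move: (Sn n a) (Sn n b) => sa sb hsb hsa.
dsp hsa; dsp hsb; dsp ha; dsp hb; dsp hj; dsp hx'; finish.
Qed.

Lemma L2 x : x < n ->
  ~~ (prn x (Sn n x) i (Sn n i) || prn x (Sn n x) j (Sn n j)) -> adjn n (gn i j x) (gn i j (Sn n x)).
Proof.
move=> hx; rewrite /adjn /prn.
have := SnP n i; have := SnP n j; have := SnP n x.
move: (Sn n i) (Sn n j) (Sn n x) => si sj sx hx' hj hi.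
have {hi} -> : si = i.+1 by lia.
have := gnP i j x; have := gnP i j sx.
move: (gn i j x) (gn i j sx) => a b hb ha.
have := SnP n a; have := SnP n b.
move: (Sn n a) (Sn n b) => sa sb hsb hsa.
dsp hsa; dsp hsb; dsp ha; dsp hb; dsp hj; dsp hx'; finish.
Qed.

Lemma F2 : ~~ adjn n (Sn n i) (Sn n j).
Proof.
rewrite /adjn.
have := SnP n i; have := SnP n j.
move: (Sn n i) (Sn n j) => si sj hj hi.
have := SnP n si; have := SnP n sj.
move: (Sn n si) (Sn n sj) => ssi ssj hsj hsi.
dsp hsi; dsp hsj; dsp hj; dsp hi; finish.
Qed.

Lemma F5 : adjn n (gn i j i) (gn i j j) && adjn n (gn i j (Sn n i)) (gn i j (Sn n j)).
Proof.
rewrite /adjn.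
have := SnP n i; have := SnP n j.
move: (Sn n i) (Sn n j) => si sj hj hi.
have := gnP i j i; have := gnP i j j; have := gnP i j si; have := gnP i j sj.
move: (gn i j i) (gn i j j) (gn i j si) (gn i j sj) => a b c d hd hc hb ha.
have := SnP n a; have := SnP n b; have := SnP n c; have := SnP n d.
move: (Sn n a) (Sn n b) (Sn n c) (Sn n d) => sa sb sc sd hsd hsc hsb hsa.
dsp hsa; dsp hsb; dsp hsc; dsp hsd; dsp ha; dsp hb; dsp hc; dsp hd; dsp hj; dsp hi; finish.
Qed.

End Arith.

Lemma set2_eq (T : finType) (a b c d : T) :
  ([set a; b] == [set c; d]) = ((a == c) && (b == d)) || ((a == d) && (b == c)).
Proof.
apply/eqP/idP => [E|]; last first.
  by case/orP=> /andP[/eqP-> /eqP->] //; rewrite setUC.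
have ha : a \in [set c; d] by rewrite -E set21.
have hb : b \in [set c; d] by rewrite -E set22.
have hc : c \in [set a; b] by rewrite E set21.
have hd : d \in [set a; b] by rewrite E set22.
rewrite !inE in ha hb hc hd.
case/orP: ha => /eqP ?; case/orP: hb => /eqP ?; subst; rewrite ?eqxx ?orbT //=;
  case/orP: hc => /eqP ?; case/orP: hd => /eqP ?; subst; by rewrite ?eqxx ?orbT.
Qed.

Lemma modS n (x : 'I_n) : nat_of_ord (ordS x) = Sn n x.
Proof.
rewrite /= /Sn; case: eqP => [->|ne]; first by rewrite modnn.
rewrite modn_small //; have := ltn_ord x; lia.
Qed.

Lemma memC n (s : {perm 'I_n}) (p q : 'I_n) :
  ([set s p; s q] \in ham_cycle_edges s) = adjn n p q.
Proof.
rewrite /adjn -!modS !val_eqE.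
apply/imsetP/idP => [[i _ /eqP]|].
  rewrite set2_eq !(inj_eq perm_inj) => /orP[]/andP[/eqP-> /eqP->]; by rewrite eqxx ?orbT.
case/orP=> /eqP->; [exists p | exists q] => //; by rewrite setUC.
Qed.

Lemma mem2s n (s : {perm 'I_n}) (a b c d : 'I_n) :
  ([set s a; s b] == [set s c; s d]) = prn a b c d.
Proof. by rewrite set2_eq !(inj_eq perm_inj) /prn. Qed.

Lemma memK (T : finType) (z : {set T}) : (z \in complete_edges T) = (#|z| == 2).
Proof. by rewrite inE. Qed.

Lemma gn_lt i j n x : j < n -> x < n -> gn i j x < n.
Proof. rewrite /gn; case: ifP; lia. Qed.

Lemma gnK i j x : gn i j (gn i j x) = x.
Proof. rewrite {2}/gn; case: ifP => h; rewrite /gn; case: ifP; lia. Qed.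

Definition gord n i j (hj : j < n) (x : 'I_n) : 'I_n := Ordinal (@gn_lt i j n x hj (ltn_ord x)).

Lemma gordE n i j (hj : j < n) x : val (@gord n i j hj x) = gn i j x.
Proof. by []. Qed.

Lemma gordK n i j (hj : j < n) : involutive (@gord n i j hj).
Proof. by move=> x; apply: val_inj; rewrite !gordE gnK. Qed.

Lemma bl (a b c k : bool) : (b -> c) -> (a -> ~~ c) -> (b -> k) ->
  (~~ (~~ b && c || a) && k) = (~~ a && (~~ c && k) || b).
Proof. case: a; case: b; case: c; case: k => /= H1 H2 H3 //; by [move: (H1 isT) | move: (H2 isT) | move: (H3 isT)]. Qed.

Lemma ordeq n (a b : 'I_n) : (a == b) = (nat_of_ord a == nat_of_ord b).
Proof. by []. Qed.

Theorem mainTheorem4 (n : nat) (H : {set {set 'I_n}}) :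
  5 <= n -> is_ham_cycle H ->
  two_swappable (complete_edges 'I_n :\: H).
Proof.
move=> n5 [s ->] e; rewrite inE memK => /andP[eC /cards2P[x [y [xy E]]]].
subst e; move: xy eC.
have [p ->] : exists p, x = s p by exists (s^-1 x)%g; rewrite permKV.
have [q ->] : exists q, y = s q by exists (s^-1 y)%g; rewrite permKV.
rewrite (inj_eq perm_inj) => xy eC; clear x y.
wlog pq : p q xy eC / p < q.
  move=> W; case: (ltngtP p q) => h.
  - exact: (W p q xy eC h).
  - rewrite setUC; apply: (W q p _ _ h); by [rewrite eq_sym | rewrite setUC].
  - by move: xy; rewrite (val_inj h) eqxx.
rewrite memC in eC.
have hq := ltn_ord q.
have h3 : nat_of_ord q != (nat_of_ord p).+1.
  move: eC; rewrite /adjn; have := SnP n p; have := SnP n q; lia.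
have h4 : ~~ ((nat_of_ord p == 0) && ((nat_of_ord q).+1 == n)).
  move: eC; rewrite /adjn; have := SnP n p; have := SnP n q; lia.
pose g := @gord n p q hq.
have ginj : injective g := can_inj (@gordK n p q hq).
have gg : forall a, g (g a) = a := @gordK n p q hq.
have finj : injective (fun y => s (g ((s^-1)%g y))).
  by move=> y z /perm_inj/ginj/(can_inj (permKV s)).
pose f := perm finj.
have hf a : f (s a) = s (g a) by rewrite permE /= permK.
have ff a : f (f a) = a by rewrite -{1}[a](permKV s) !hf gg permKV.
have hfs a b : f @: [set s a; s b] = [set s (g a); s (g b)] by rewrite imsetU1 imset_set1 !hf.
pose C := ham_cycle_edges s.
pose A := [set [set s p; s q]; [set s (ordS p); s (ordS q)]].
pose B := [set [set s p; s (ordS p)]; [set s q; s (ordS q)]].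
have Sp : nat_of_ord (ordS p) = Sn n p by rewrite modS.
have hSpn : Sn n p = (nat_of_ord p).+1 by rewrite /Sn; case: eqP => //; lia.
have memA a b : ([set s a; s b] \in A) = prn a b p q || prn a b (Sn n p) (Sn n q).
  by rewrite !inE !mem2s /prn !modS.
have memB a b : ([set s a; s b] \in B) = prn a b p (Sn n p) || prn a b q (Sn n q).
  by rewrite !inE !mem2s /prn !modS.
have hAC z : z \in A -> z \notin C.
  rewrite !inE => /orP[]/eqP->; rewrite memC // !modS; exact: F2.
have hBC z : z \in B -> z \in C.
  rewrite !inE => /orP[]/eqP->; rewrite memC /adjn !modS eqxx //.
have hBK z : z \in B -> #|z| == 2.
  rewrite !inE => /orP[]/eqP->; rewrite cards2 (inj_eq perm_inj) ordeq !modS (_ : (_ != _) = true) //;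
  rewrite /Sn; case: ifP; lia.
have imC : [set f @: z | z : {set 'I_n} in C] = (C :\: B) :|: A.
  have S2 : forall z, z \in (C :\: B) :|: A -> f @: z \in C.
    move=> z; rewrite !inE => /orP[/andP[zB zC]|/orP[]/eqP->].
    - move: zC zB => /imsetP[x _ ->]; rewrite hfs !mem2s memC !gordE !modS.
      exact: (L2 n p q pq hq h3 h4 x (ltn_ord x)).
    - rewrite hfs memC !gordE; by case/andP: (F5 n p q pq hq h3 h4).
    - rewrite hfs memC !gordE !modS; by case/andP: (F5 n p q pq hq h3 h4).
  apply/eqP; rewrite eqEsubset; apply/andP; split.
    apply/subsetP => z /imsetP[w /imsetP[x _ ->] ->].
    rewrite hfs inE memA inE memB memC !gordE !modS.
    have := L1 n p q pq hq h3 h4 x (ltn_ord x).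
    by case: (prn _ _ _ _); case: (prn _ _ _ _); case: (prn _ _ _ _); case: (prn _ _ _ _); case: adjn.
  apply/subsetP => z hz; apply/imsetP; exists (f @: z); first exact: S2.
  by rewrite -imset_comp (eq_imset _ ff) imset_id.
exists A, B; split.
- apply/subsetP => z hz; rewrite inE memK (negbTE (hAC z hz)) /=.
  move: hz; rewrite !inE => /orP[]/eqP->; rewrite cards2 (inj_eq perm_inj) ?ordeq ?modS (_ : (_ != _) = true) //;
  apply/idP; have := SnP n p; have := SnP n q; lia.
- by apply/subsetP => z hz; rewrite /compl_edges !inE ?memK (hBC z hz) (hBK z hz).
- by rewrite !inE eqxx.
- by rewrite cards2; case: (_ != _).
exists f => z; rewrite /swap_edges in_setU !in_setD !memK.
have zC : (z \in C) = (f @: z \in (C :\: B) :|: A).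
  rewrite -imC; symmetry; apply: (@mem_imset _ _ (fun A : {set 'I_n} => f @: A)).
  exact: (imset_inj perm_inj).
have zK : #|f @: z| = #|z| by rewrite card_imset //; exact: perm_inj.
rewrite zC zK in_setU in_setD.
apply: bl; [exact: hBC | exact: hAC | by move=> /hBK; rewrite zK].
Qed.
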